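(* Let $D = (D_{ij})$ be an $m \times m$ matrix of differences and let $G_n$ be the $m$-block circulant graph on $nm$ vertices with matrix of differences $D$. Setting $\alpha_n = \alpha(G_n)/(nm)$, we have $\lim_{n\to\infty} \alpha_n = \sup_n \alpha_n$.
   Context: An $m\times m$ matrix of differences is a matrix $D=(D_{ij})$ of finite subsets of $\mathbb{Z}$ with $D_{ji} = -D_{ij}$. $G_n$ has vertex set $\{(i,u) : 0 \leq i \leq m-1,\ 0\leq u \leq n-1\}$, and $(i,u)$, $(j,v)$ (possibly equal) are adjacent iff $v-u$ is congruent modulo $n$ to some element of $D_{ij}$. $\alpha(G)$ is the maximum size of an independent set (no two adjacent vertices, no vertex with a loop). *)

(* Defs.v *)
From HB Require Import structures.
From mathcomp Require Import all_boot all_order all_algebra.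
From mathcomp Require Import all_classical all_reals all_analysis.
Set Implicit Arguments. Unset Strict Implicit. Unset Printing Implicit Defensive.
Import Order.TTheory GRing.Theory Num.Theory.
Local Open Scope ring_scope.

Definition diff_matrix (m : nat) := 'I_m -> 'I_m -> seq int.

Definition is_diff_matrix (m : nat) (D : diff_matrix m) : Prop :=
  forall (i j : 'I_m) (x : int), (x \in D j i) = (- x \in D i j).

Definition circ_adj (m n : nat) (D : diff_matrix m)
    (x y : 'I_m * 'I_n) : bool :=
  has (fun d : int => (n%:Z %| ((y.2 : nat)%:Z - (x.2 : nat)%:Z - d))%Z) (D x.1 y.1).

(* independent set: no two (possibly equal) vertices adjacent; in particular no loops *)
Definition independent (m n : nat) (D : diff_matrix m)
    (S : {set 'I_m * 'I_n}) : bool :=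
  [forall x in S, forall y in S, ~~ circ_adj D x y].

Definition alpha (m n : nat) (D : diff_matrix m) : nat :=
  \max_(S : {set 'I_m * 'I_n} | independent D S) #|S|.

Definition alpha_norm (R : realType) (m : nat) (D : diff_matrix m) (n : nat) : R :=
  ((alpha n D)%:R / (n * m)%:R)%R.

(* Main.v *)
Require Import Defs.
From HB Require Import structures.
From mathcomp Require Import all_boot all_order all_algebra.
From mathcomp Require Import all_classical all_reals all_analysis.
From mathcomp Require Import zify ring lra.
Import Order.TTheory GRing.Theory Num.Theory numFieldNormedType.Exports.

Local Open Scope ring_scope.

Lemma indep0 m n (D : diff_matrix m) : independent D (finset.set0 : {set 'I_m * 'I_n}).
Proof. by apply/forallP => x; rewrite inE. Qed.

Lemma alpha_witness m n (D : diff_matrix m) :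
  exists2 S : {set 'I_m * 'I_n}, independent D S & alpha n D = #|S|.
Proof.
have h : (0 < #|[pred S : {set 'I_m * 'I_n} | independent D S]|)%N.
  by apply/card_gt0P; exists finset.set0; rewrite inE indep0.
have [S hS e] := eq_bigmax_cond (fun S : {set 'I_m * 'I_n} => #|S|) h.
by exists S; [move: hS; rewrite inE | exact: e].
Qed.

Lemma alpha_le m n (D : diff_matrix m) : (alpha n D <= m * n)%N.
Proof.
apply/bigmax_leqP => S _.
have := max_card (mem S); rewrite card_prod !card_ord; exact.
Qed.

Lemma key m n' N' (D : diff_matrix m) (c : nat)
  (hc : forall i j d, d \in D i j -> (absz d < c)%N) :
  (((N'.+1 - c) %/ n'.+1) * alpha n'.+1 D <= alpha N'.+1 D)%N.
Proof.
set n := n'.+1; set N := N'.+1; set q := ((N - c) %/ n)%N.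
have [S indS ->] := alpha_witness m n D.
have hqn : (q * n <= N - c)%N by rewrite leq_trunc_div.
have bnd : forall (t : 'I_q) (u : 'I_n), (t * n + u < N - c)%N.
  move=> t u; apply: leq_trans hqn.
  have : (t.+1 * n <= q * n)%N by rewrite leq_mul2r ltn_ord orbT.
  rewrite mulSn; move: (ltn_ord u); lia.
pose f := fun p : 'I_q * ('I_m * 'I_n) =>
  (p.2.1, (inord (p.1 * n + p.2.2) : 'I_N)).
have fval : forall p, ((f p).2 : nat) = (p.1 * n + p.2.2)%N.
  move=> p; rewrite /f /= inordK //; move: (bnd p.1 p.2.2); lia.
pose T := [set f p | p in finset.setX [set: 'I_q] S].
have cardT : #|T| = (q * #|S|)%N.
  rewrite card_in_imset ?cardsX ?cardsT ?card_ord //.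
  move=> [t [i u]] [s [j v]] _ _ /= [eij] /(congr1 val) /=.
  rewrite !inordK; last 2 first.
  - by move: (bnd s v); lia.
  - by move: (bnd t u); lia.
  move=> e.
  have e1 : t = s :> nat.
    by move: (congr1 (fun x => x %/ n)%N e); rewrite /= !divnMDl // !divn_small // !addn0.
  have e2 : u = v :> nat.
    by move: (congr1 (fun x => x %% n)%N e); rewrite /= !modnMDl !modn_small.
  by rewrite eij; congr (_, (_, _)); apply: val_inj.
rewrite -cardT; apply: leq_bigmax_cond.
apply/forallP => x; apply/implyP => /imsetP [[t [i u]] + ->].
rewrite inE /= => /andP [_ Su].
apply/forallP => y; apply/implyP => /imsetP [[s [j v]] + ->].
rewrite inE /= => /andP [_ Sv].
apply/negP => /hasP [d dD].
rewrite !fval /= => hdiv.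
have z : ((s * n + v)%:Z - (t * n + u)%:Z - d = 0)%R.
  apply/eqP; apply: contraTT hdiv => nz.
  rewrite dvdzE /=; apply/negP => /dvdn_leq.
  have := hc _ _ _ dD; have := bnd s v; have := bnd t u.
  move: nz; rewrite -absz_eq0; lia.
move/forallP: indS => /(_ (i, u)); rewrite Su /= => /forallP /(_ (j, v)).
rewrite Sv /= => /hasP; apply; exists d => //=.
have -> : (v%:Z - u%:Z - d = (t%:Z - s%:Z) * n%:Z)%R.
  move: z; rewrite !PoszD !PoszM => z.
  apply/eqP; rewrite -subr_eq0; apply/eqP; rewrite -[RHS]z. ring.
by rewrite dvdz_mull.
Qed.

Lemma lowerb (R : realType) m (D : diff_matrix m) c (hm : (0 < m)%N)
  (hc : forall i j d, d \in D i j -> (absz d < c)%N) n' N' :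
  alpha_norm R D n'.+1 - (c + n'.+1)%:R / N'.+1%:R <= alpha_norm R D N'.+1.
Proof.
have h1 := key m n' N' D c hc.
set n := n'.+1 in h1 *; set N := N'.+1 in h1 *.
set q := ((N - c) %/ n)%N in h1.
set A := alpha N D in h1 *; set B := alpha n D in h1 *.
have hB : (B <= m * n)%N by apply: (alpha_le m n D).
have hN : (N <= q * n + n + c)%N.
  have := ltn_ceil (N - c) (ltn0Sn n'); rewrite -/q mulSn; lia.
have h2 : (B * N <= q * B * n + n * m * (n + c))%N by nia.
rewrite /alpha_norm -/A -/B -/n -/N.
have n0 : (0 : R) < n%:R by rewrite ltr0n.
have N0 : (0 : R) < N%:R by rewrite ltr0n.
have m0 : (0 : R) < m%:R by rewrite ltr0n.
have e1 : B%:R / (n * m)%:R - (c + n)%:R / N%:R =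
   (B%:R * N%:R - (c%:R + n%:R) * n%:R * m%:R) / (n%:R * m%:R * N%:R) :> R.
  rewrite natrM natrD; field.
  by rewrite !gt_eqF.
have e2 : A%:R / (N * m)%:R = (A%:R * n%:R) / (n%:R * m%:R * N%:R) :> R.
  rewrite natrM; field.
  by rewrite !gt_eqF.
rewrite e1 e2; apply: ler_wpM2r.
  by rewrite invr_ge0 !mulr_ge0 // ltW.
move: h1 h2; rewrite -!(ler_nat R) !natrM !natrD => h1 h2.
nra.
Qed.

Local Open Scope classical_set_scope.
Local Open Scope ring_scope.

(* n ranges over positive integers: the sequence is k |-> alpha_{k+1} *)
Theorem theorem8 (R : realType) (m : nat) (D : diff_matrix m) :
  (0 < m)%N -> is_diff_matrix D ->
  alpha_norm R D k.+1 @[k --> \oo] -->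
    sup (range (fun k : nat => alpha_norm R D k.+1)).
Proof.
move=> hm _.
set c := (\max_(i : 'I_m) \max_(j : 'I_m) \max_(d <- D i j) absz d).+1.
have hc : forall i j d, d \in D i j -> (absz d < c)%N.
  move=> i j d hd; rewrite ltnS.
  apply: (leq_trans _ (leq_bigmax i)).
  apply: (leq_trans _ (leq_bigmax j)).
  exact: (leq_bigmax_seq d hd).
set a := fun k : nat => alpha_norm R D k.+1.
have a01 : forall k, 0 <= a k <= 1.
  move=> k; rewrite /a /alpha_norm divr_ge0 ?ler0n //=.
  rewrite ler_pdivrMr ?ltr0n ?muln_gt0 ?hm // mul1r ler_nat mulnC.
  exact: alpha_le.
have hs : has_sup (range a).
  split; first by exists (a 0%N), 0%N.
  by exists 1 => x [k _ <-]; case/andP: (a01 k).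
apply/cvgrPdist_lt => e e0.
have e20 : 0 < e / 2 by rewrite divr_gt0.
have [_ [n0 _ <-] hn0] := sup_adherent e20 hs.
set K := (c + n0.+1)%N.
exists (Num.truncn (K%:R * 2 / e)) => // t /= ht.
have hat : a t <= sup (range a) by apply: sup_upper_bound => //; exists t.
have hlow := lowerb R m D c hm hc n0 t.
have hK : K%:R * 2 / e < t.+1%:R :> R.
  apply: lt_le_trans (truncnS_gt _) _; rewrite ler_nat ltnS; exact: ht.
rewrite ltr_pdivrMr // in hK.
have hK2 : K%:R / t.+1%:R < e / 2 :> R.
  rewrite ltr_pdivrMr ?ltr0n //; lra.
rewrite ger0_norm ?subr_ge0 //.
rewrite -/(a n0) -/(a t) -/K in hlow.
move: hn0 hK2 hlow; set s := sup _; set x := K%:R / _; move: (a n0) (a t) => y z; lra.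
Qed.
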